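(* For a glass relaxing isothermally at fixed medium temperature $T_0$ and pressure $P_0$, with $T_0<T_{0\text{g}}$ and $S>S_{\text{SCL}}$, the enthalpy satisfies $H(T_0,P_0,t)>H_{\text{SCL}}(T_0,P_0)$.
   Context: The system is in contact with a large equilibrium medium at fixed $T_0,P_0$ and is in internal equilibrium with instantaneous temperature $T(t)$ defined by $1/T=\partial S/\partial E$, where $S(E,V,\boldsymbol{\xi})$ is the entropy as a function of energy, volume and internal variables. Below $T_{0\text{g}}$ the system is out of equilibrium with the medium, and during relaxation $T(t)>T_0$, with $T(t)\to T_0$ from above. The enthalpy is $H=E+P_0V$, and for an isobaric process $dH=d_{\text{e}}Q=T_0\,d_{\text{e}}S$, where $d_{\text{e}}Q$, $d_{\text{e}}S$ are the heat and entropy exchanged with the medium. The second law gives $[T_0-T(t)]d_{\text{e}}S(t)\ge0$. $H_{\text{SCL}}(T_0,P_0)$ and $S_{\text{SCL}}$ are the enthalpy and entropy of the equilibrium supercooled liquid at $T_0,P_0$; $T_{0\text{g}}$ is the temperature below which the system falls out of equilibrium on the observation time scale. *)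

(* Defs.v *)
From Stdlib Require Import Reals.
From Coquelicot Require Export Coquelicot.
Open Scope R_scope.

Definition enthalpy (P0 : R) (E V : R -> R) (t : R) : R := E t + P0 * V t.

(* Main.v *)
Require Import Defs.
From Stdlib Require Import Reals Lra.
From Coquelicot Require Import Coquelicot.
Open Scope R_scope.

Lemma mvt_diff (f df : R -> R) a b :
  (forall t, 0 <= t -> is_derive f t (df t)) -> 0 <= a <= b ->
  exists c, a <= c <= b /\ f b - f a = df c * (b - a).
Proof.
  intros Hd Hab.
  destruct (MVT_gen f a b df) as [c [Hc Heq]].
  - intros x Hx. apply Hd. rewrite Rmin_left in Hx by lra. lra.
  - intros x Hx. rewrite Rmin_left in Hx by lra. rewrite Rmax_right in Hx by lra.
    apply continuity_pt_filterlim. apply (@ex_derive_continuous R_AbsRing R_NormedModule).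
    exists (df x). apply Hd. lra.
  - exists c. rewrite Rmin_left in Hc by lra. rewrite Rmax_right in Hc by lra.
    split; [exact Hc | exact Heq].
Qed.

Lemma lim_ge (f : R -> R) (l c a : R) :
  is_lim f p_infty l -> (forall x, a < x -> c <= f x) -> c <= l.
Proof.
  intros Hl Hf.
  pose proof (is_lim_le_loc (fun _ => c) f p_infty c l) as H.
  simpl in H. apply H.
  - exists a. exact Hf.
  - apply is_lim_const.
  - exact Hl.
Qed.

Theorem theorem4
  (T0 P0 T0g HSCL SSCL : R) (E V T Se Si dH dSe dSi : R -> R) :
  0 < T0 -> T0 < T0g ->
  (forall t, 0 <= t -> T t > T0) ->
  (forall t, 0 <= t -> is_derive (enthalpy P0 E V) t (dH t)) ->
  (forall t, 0 <= t -> is_derive Se t (dSe t)) ->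
  (forall t, 0 <= t -> is_derive Si t (dSi t)) ->
  (forall t, 0 <= t -> dH t = T0 * dSe t) ->
  (forall t, 0 <= t -> (T0 - T t) * dSe t >= 0) ->
  (forall t, 0 <= t -> dSi t >= 0) ->
  (forall t, 0 <= t -> Se t + Si t > SSCL) ->
  is_lim (fun t => Se t + Si t) p_infty SSCL ->
  is_lim (enthalpy P0 E V) p_infty HSCL ->
  forall t, 0 <= t -> enthalpy P0 E V t > HSCL.
Proof.
  intros HT0 _ HT HdH HdSe HdSi Hiso H2 Hi HS HlS HlH t Ht.
  set (H := enthalpy P0 E V) in *.
  assert (HdSe0 : forall s, 0 <= s -> dSe s <= 0).
  { intros s Hs. specialize (HT s Hs). specialize (H2 s Hs).
    destruct (Rle_dec (dSe s) 0) as [|Hn]; [assumption|].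
    exfalso. assert (0 < T s - T0) by lra.
    assert (0 < (T s - T0) * dSe s) by (apply Rmult_lt_0_compat; lra). lra. }
  assert (Hmono : forall a b, 0 <= a <= b -> H b <= H a).
  { intros a b Hab. destruct (mvt_diff H dH a b HdH Hab) as [c [Hc Heq]].
    rewrite Hiso in Heq by lra. specialize (HdSe0 c ltac:(lra)).
    assert (T0 * dSe c * (b - a) <= 0).
    { apply Rmult_le_0_r; [|lra]. rewrite <- (Rmult_0_r T0).
      apply Rmult_le_compat_l; lra. }
    lra. }
  assert (Hge : HSCL <= H t).
  { cut (- H t <= - HSCL); [lra|]. apply (lim_ge (fun x => - H x) (- HSCL) (- H t) t).
    - apply (is_lim_opp H p_infty HSCL) in HlH. exact HlH.
    - intros x Hx. pose proof (Hmono t x ltac:(lra)). lra. }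
  destruct (Rle_lt_or_eq_dec _ _ Hge) as [|Heq]; [lra|].
  exfalso.
  assert (Hconst : forall s, t <= s -> H s = H t).
  { intros s Hs. pose proof (Hmono t s ltac:(lra)).
    destruct (Rle_dec (H s) (H t)) as [Hle|]; [|lra].
    destruct (Rle_lt_or_eq_dec _ _ Hle) as [Hlt|]; [|auto].
    exfalso.
    assert (HSCL <= H s).
    { cut (- H s <= - HSCL); [lra|]. apply (lim_ge (fun x => - H x) (- HSCL) (- H s) s).
      - apply (is_lim_opp H p_infty HSCL) in HlH. exact HlH.
      - intros x Hx. pose proof (Hmono s x ltac:(lra)). lra. }
    lra. }
  assert (HSmono : forall s, t <= s -> Se t + Si t <= Se s + Si s).
  { intros s Hs.
    destruct (mvt_diff Si dSi t s HdSi ltac:(lra)) as [c [Hc Heqi]].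
    destruct (mvt_diff H dH t s HdH ltac:(lra)) as [c' [Hc' Heqh]].
    destruct (mvt_diff Se dSe t s HdSe ltac:(lra)) as [c2 [Hc2 Heqe]].
    pose (g := fun x => H x - T0 * Se x).
    assert (Hg : forall x, 0 <= x -> is_derive g x 0).
    { intros x Hx. unfold g.
      replace 0 with (dH x - T0 * dSe x) by (rewrite Hiso by lra; ring).
      apply (is_derive_minus H (fun y => T0 * Se y)).
      - apply HdH; lra.
      - apply is_derive_scal. apply HdSe; lra. }
    destruct (mvt_diff g (fun _ => 0) t s Hg ltac:(lra)) as [c3 [_ Heqg]].
    unfold g in Heqg. rewrite (Hconst s Hs) in Heqg.
    assert (Se s = Se t).
    { rewrite Rmult_0_l in Heqg. apply Rmult_eq_reg_l with T0; [lra | apply Rgt_not_eq; lra]. }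
    specialize (Hi c ltac:(lra)).
    assert (0 <= dSi c * (s - t)) by (apply Rmult_le_pos; lra).
    lra. }
  assert (Se t + Si t <= SSCL).
  { apply (lim_ge (fun x => Se x + Si x) SSCL (Se t + Si t) t HlS).
    intros x Hx. apply HSmono. lra. }
  specialize (HS t Ht). lra.
Qed.
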